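(* Let $G=(V,E)$ be a non-empty finite simple graph with no isolated vertices and no isolated edges, and let $A$ be any set of vertices of $G$ each of which is adjacent to a vertex of degree $1$. Then \[ D_G(x)=\sum_{J\subseteq V\setminus A}(-1)^{|J|}(x+1)^{|V|-|N_G[J]|}=\sum_{\substack{J\subseteq V\setminus A\\|J|\le|V|-\delta(G)}}(-1)^{|J|}\Big[(x+1)^{|V|-|N_G[J]|}-1\Big]. \]
   Context: The domination polynomial is $D_G(x)=\sum_{k=0}^{|V|}d_k(G)x^k$, where $d_k(G)$ is the number of dominating sets of $G$ of cardinality $k$ (a set $S$ is dominating if every vertex not in $S$ is adjacent to a vertex of $S$). $N_G[J]$ is the closed neighbourhood of $J$ (vertices in $J$ or adjacent to a vertex of $J$), and $\delta(G)$ is the minimum degree. An isolated edge is an edge both of whose endpoints have degree $1$. *)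

(* Defs.v *)
From mathcomp Require Import all_boot all_order all_algebra.
Set Implicit Arguments. Unset Strict Implicit. Unset Printing Implicit Defensive.
Import GRing.Theory.

Section Graphs.
Variable T : finType.
Variable e : rel T.

Definition simple_graph : Prop := symmetric e /\ irreflexive e.

Definition nbhd (v : T) : {set T} := [set u | e v u].
Definition deg (v : T) : nat := #|nbhd v|.

Definition cnbhd (J : {set T}) : {set T} :=
  [set u | (u \in J) || [exists j in J, e j u]].

Definition dominating (S : {set T}) : bool :=
  [forall v, (v \in S) || [exists u in S, e v u]].

Definition dom_count (k : nat) : nat :=
  #|[set S : {set T} | dominating S & #|S| == k]|.

Definition dom_poly : {poly int} :=
  \sum_(k < #|T|.+1) (dom_count k)%:R *: 'X^k.

(* minimum degree delta(G); the initial value #|T| exceeds every degree,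
   so for a non-empty vertex set this is exactly min_v deg v *)
Definition min_deg : nat := \big[minn/#|T|]_(v : T) deg v.

Definition no_isolated_vertices : Prop := forall v : T, 0 < deg v.

Definition no_isolated_edges : Prop :=
  forall u v : T, e u v -> ~ (deg u = 1 /\ deg v = 1)%N.

End Graphs.

(* Main.v *)
Require Import Defs.
From mathcomp Require Import all_boot all_order all_algebra.
From mathcomp Require Import zify.
Import GRing.Theory.
Local Open Scope ring_scope.

Lemma prod_expand (I : finType) (R : comPzRingType) (F : I -> R) :
  \prod_i (F i + 1) = \sum_(J : {set I}) \prod_(i in J) F i.
Proof.
rewrite bigA_distr; apply: eq_big => // J _.
by rewrite [RHS]big_mkcond.
Qed.

Lemma sum_subsets (I : finType) (R : comPzRingType) (B : {set I}) (x : R) :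
  \sum_(S : {set I} | S \subset B) x ^+ #|S| = (x + 1) ^+ #|B|.
Proof.
have -> : (x + 1) ^+ #|B| = \prod_(i in B) (x + 1) by rewrite prodr_const.
rewrite big_mkcond [RHS]big_mkcond /=.
transitivity (\prod_i ((if i \in B then x else 0) + 1)); last first.
  by apply: eq_bigr => i _; case: (i \in B); rewrite ?add0r.
rewrite prod_expand; apply: eq_bigr => S _.
case: (boolP (S \subset B)) => sSB.
  by rewrite (eq_bigr (fun _ => x)) ?prodr_const // => i iS; rewrite (subsetP sSB i iS).
have [i iS niB] := subsetPn sSB.
by rewrite (bigD1 i) //= (negbTE niB) mul0r.
Qed.

Section Main.
Variables (T : finType) (e : rel T) (A : {set T}).
Hypothesis sg : simple_graph e.
Hypothesis nie : no_isolated_edges e.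
Hypothesis hA : forall a, a \in A -> exists2 w : T, e a w & deg e w = 1%N.

Definition bad (v : T) (S : {set T}) : bool :=
  [forall u in S, (u != v) && ~~ e v u].

Lemma leaf_nb a w : a \in A -> e a w -> deg e w = 1%N ->
  nbhd e w = [set a] /\ w \notin A.
Proof.
move=> aA eaw dw.
have nw : nbhd e w = [set a].
  move: (dw); rewrite /deg => /eqP /cards1P [x hx].
  have : a \in nbhd e w by rewrite inE (proj1 sg).
  by rewrite hx inE => /eqP ->.
split => //; apply/negP => wA.
have [w' ew' dw'] := hA _ wA.
have : w' \in nbhd e w by rewrite inE.
rewrite nw inE => /eqP ew'a; subst w'.
exact: (nie _ _ eaw (conj dw' dw)).
Qed.

Lemma dom_iff S :
  dominating e S = [forall v, (v \notin A) ==> ~~ bad v S].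
Proof.
apply/forallP/forallP => H v.
- apply/implyP => _; apply/negP => /forallP Hb.
  case/orP: (H v) => [vS | /existsP [u /andP [uS evu]]].
  + by have := Hb v; rewrite vS eqxx.
  + by have := Hb u; rewrite uS evu andbF.
- case: (boolP (v \in A)) => [vA|nvA]; last first.
  + have := H v; rewrite nvA /= => /forallPn [u].
    rewrite negb_imply negb_and !negbK => /andP [uS /orP [/eqP uv | evu]].
      by rewrite -uv uS.
    by apply/orP; right; apply/existsP; exists u; rewrite uS.
  + have [w evw dw] := hA _ vA.
    have [nw nwA] := leaf_nb _ _ vA evw dw.
    have := H w; rewrite nwA /= => /forallPn [u].
    rewrite negb_imply negb_and !negbK => /andP [uS /orP [/eqP uw | ewu]].
      by apply/orP; right; apply/existsP; exists u; rewrite uS uw evw.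
    have : u \in nbhd e w by rewrite inE.
    by rewrite nw inE => /eqP uv; rewrite -uv uS.
Qed.

Definition c (v : T) (S : {set T}) : {poly int} :=
  if (v \notin A) && bad v S then -1 else 0.

Lemma cond_eq (J S : {set T}) :
  [forall v in J, (v \notin A) && bad v S] =
  (J \subset ~: A) && (S \subset ~: cnbhd e J).
Proof.
apply/forallP/andP => [H | [/subsetP HJ /subsetP HS] v].
- split; apply/subsetP => x xX.
  + by have := H x; rewrite xX inE => /andP [].
  + rewrite in_setC /cnbhd inE negb_or; apply/andP; split.
    * apply/negP => xJ; have := H x; rewrite xJ /= => /andP [_ /forallP /(_ x)].
      by rewrite xX eqxx.
    * apply/existsP => -[j /andP [jJ ejx]]; have := H j.
      rewrite jJ /= => /andP [_ /forallP /(_ x)].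
      by rewrite xX ejx andbF.
- apply/implyP => vJ; apply/andP; split.
    by have := HJ v vJ; rewrite inE.
  apply/forallP => u; apply/implyP => uS.
  have := HS u uS; rewrite in_setC /cnbhd inE negb_or => /andP [nuJ nex].
  apply/andP; split.
    by apply/negP => /eqP uv; rewrite uv vJ in nuJ.
  apply: contra nex => evu; apply/existsP; exists v; by rewrite vJ.
Qed.

Lemma prod_c (J S : {set T}) : \prod_(v in J) c v S =
  if (J \subset ~: A) && (S \subset ~: cnbhd e J) then (-1) ^+ #|J| else 0.
Proof.
rewrite -cond_eq; case: ifP => [/forallP H | /negbT /forallPn [v]].
- rewrite -prodr_const; apply: eq_bigr => v vJ; rewrite /c.
  by have := H v; rewrite vJ /= => ->.
- rewrite negb_imply => /andP [vJ hv]; by rewrite (bigD1 v) //= /c (negbTE hv) mul0r.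
Qed.

Lemma dom_poly_sum :
  dom_poly e = \sum_(S : {set T} | dominating e S) 'X^#|S|.
Proof.
rewrite /dom_poly (partition_big (fun S : {set T} => inord #|S| : 'I_#|T|.+1) xpredT) //=.
apply: eq_bigr => k _.
rewrite /dom_count scaler_nat -sumr_const.
have hS : forall S : {set T}, (inord #|S| == k :> 'I_#|T|.+1) = (#|S| == k :> nat).
  by move=> S; rewrite -val_eqE /= inordK // ltnS max_card.
apply: eq_big => [S|S]; first by rewrite inE hS.
by rewrite inE => /andP [_ /eqP ->].
Qed.

Lemma first_formula :
  dom_poly e = \sum_(J : {set T} | J \subset ~: A)
       (-1) ^+ #|J| * ('X + 1) ^+ (#|T| - #|cnbhd e J|).
Proof.
rewrite dom_poly_sum.
transitivity (\sum_(S : {set T}) 'X^#|S| * \prod_v (c v S + 1)).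
  rewrite big_mkcond; apply: eq_bigr => S _; rewrite dom_iff.
  case: ifP => [/forallP H | /negbT /forallPn [v]].
    rewrite big1 ?mulr1 // => v _; rewrite /c.
    by have := H v; case: (v \notin A) => /= [/negbTE ->|_]; rewrite /= add0r.
  rewrite negb_imply negbK => /andP [vA hv].
  by rewrite (bigD1 v) //= /c vA hv /= addNr mul0r mulr0.
under eq_bigr do rewrite prod_expand mulr_sumr.
rewrite exchange_big /= [RHS]big_mkcond; apply: eq_bigr => J _.
under eq_bigr do rewrite prod_c.
case: (boolP (J \subset ~: A)) => hJ /=; last by rewrite big1 // => S _; rewrite mulr0.
transitivity (\sum_(S : {set T} | S \subset ~: cnbhd e J) ((-1) ^+ #|J| * 'X^#|S| : {poly int})).
  by rewrite [RHS]big_mkcond; apply: eq_bigr => S _; case: ifP; rewrite ?mulr0 // mulrC.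
rewrite -mulr_sumr sum_subsets; congr (_ * _ ^+ _).
by rewrite -(cardsC (cnbhd e J)) addKn.
Qed.

Lemma full_nb (J : {set T}) : (#|T| - min_deg e < #|J|)%N -> cnbhd e J = setT.
Proof.
move=> hJ; apply/setP => v; rewrite /cnbhd !inE.
apply/negPn/negP; rewrite negb_or => /andP [nvJ nex].
have dv : (min_deg e <= deg e v)%N.
  rewrite /min_deg; have : v \in index_enum T by rewrite mem_index_enum.
  elim: (index_enum T) => // x r IH; rewrite inE big_cons /= => /orP [/eqP -> | vr].
    exact: geq_minl.
  exact: leq_trans (geq_minr _ _) (IH vr).
have disj : J :&: nbhd e v = set0.
  apply/setP => u; rewrite !inE; apply/negP => /andP [uJ evu].
  by apply: (negP nex); apply/existsP; exists u; rewrite uJ (proj1 sg).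
have sub : J :|: nbhd e v \subset ~: [set v].
  apply/subsetP => u; rewrite !inE => /orP [uJ | evu]; apply/eqP => uv.
    by rewrite -uv uJ in nvJ.
  by rewrite uv (proj2 sg) in evu.
have := subset_leq_card sub.
rewrite cardsU disj cards0 subn0 cardsC1 -/(deg e v).
lia.
Qed.

Lemma notA_nonempty : (0 < #|T|)%N -> (0 < #|~: A|)%N.
Proof.
move=> /card_gt0P [v _]; apply/card_gt0P.
case: (boolP (v \in A)) => vA; last by exists v; rewrite inE.
have [w evw dw] := hA _ vA; have [_ nwA] := leaf_nb _ _ vA evw dw.
by exists w; rewrite inE.
Qed.

End Main.

Theorem corollary5 (T : finType) (e : rel T) (A : {set T}) :
  simple_graph e ->
  (0 < #|T|)%N ->
  no_isolated_vertices e ->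
  no_isolated_edges e ->
  (forall a, a \in A -> exists2 w : T, e a w & deg e w = 1%N) ->
  dom_poly e =
    \sum_(J : {set T} | J \subset ~: A)
       (-1) ^+ #|J| * ('X + 1) ^+ (#|T| - #|cnbhd e J|)
  /\
  dom_poly e =
    \sum_(J : {set T} | (J \subset ~: A) && (#|J| <= #|T| - min_deg e)%N)
       (-1) ^+ #|J| * (('X + 1) ^+ (#|T| - #|cnbhd e J|) - 1).
Proof.
move=> sg n0 _ nie hA.
have F := @first_formula _ _ _ sg nie hA.
split => //.
rewrite big_mkcondr /=.
transitivity (\sum_(J : {set T} | J \subset ~: A)
   ((-1) ^+ #|J| * (('X + 1) ^+ (#|T| - #|cnbhd e J|) - 1) : {poly int})); last first.
  apply: eq_bigr => J _; case: ifP => // /negbT; rewrite -ltnNge => hJ.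
  by rewrite (@full_nb _ _ sg _ hJ) cardsT subnn expr0 subrr mulr0.
under eq_bigr do rewrite mulrBr mulr1.
rewrite sumrB -F.
have -> : \sum_(J : {set T} | J \subset ~: A) (-1) ^+ #|J| = 0 :> {poly int}.
  rewrite sum_subsets addNr expr0n.
  by have := @notA_nonempty _ _ _ sg nie hA n0; case: #|~: A|.
by rewrite subr0.
Qed.
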